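(* Let $k\ge 1$ be an integer and let $G=(V,E)$ be a $k$-intersection polished graph. Then every set $S\subseteq V$ with $|S|=k$ is contained in at most one maximal clique of $G$.
   Context: All graphs are finite and simple. For a vertex $v$, $N[v]$ denotes its closed neighbourhood (the set of neighbours of $v$ together with $v$). For an integer $k$, $P^k(G)$ is the graph on the same vertex set as $G$ in which two distinct vertices $u,v$ are adjacent if and only if $|N[u]\cap N[v]|\ge k$, the closed neighbourhoods being taken in $G$. A graph $G$ is called $k$-intersection polished if $P^k(G)=G$. A clique is a set of pairwise adjacent vertices; it is maximal if it is not properly contained in another clique. *)

(* Defs.v *)
From mathcomp Require Import all_boot.
Set Implicit Arguments. Unset Strict Implicit. Unset Printing Implicit Defensive.

(* A finite simple graph: vertex type T (finite), edge relation e,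
   assumed symmetric and irreflexive in the theorem. *)

Definition closed_nbhd (T : finType) (e : rel T) (v : T) : {set T} :=
  [set u | (u == v) || e v u].

Definition Pk_rel (T : finType) (e : rel T) (k : nat) : rel T :=
  fun u v => (u != v) && (k <= #|closed_nbhd e u :&: closed_nbhd e v|).

Definition intersection_polished (T : finType) (e : rel T) (k : nat) : Prop :=
  forall u v, Pk_rel e k u v = e u v.

Definition is_clique (T : finType) (e : rel T) (A : {set T}) : Prop :=
  forall u v, u \in A -> v \in A -> u != v -> e u v.

Definition is_maximal_clique (T : finType) (e : rel T) (A : {set T}) : Prop :=
  is_clique e A /\ (forall B : {set T}, is_clique e B -> A \subset B -> B = A).

(* Main.v *)
Require Import Defs.
From mathcomp Require Import all_boot.

Theorem mainTheorem3 (T : finType) (e : rel T) (k : nat)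
  (e_sym : symmetric e) (e_irr : irreflexive e) (hk : 1 <= k)
  (hpol : intersection_polished e k)
  (S : {set T}) (hS : #|S| = k) (C1 C2 : {set T}) :
  is_maximal_clique e C1 -> is_maximal_clique e C2 ->
  S \subset C1 -> S \subset C2 -> C1 = C2.
Proof.
move=> [cl1 max1] [cl2 max2] sS1 sS2.
have inN : forall u, u \in C1 :|: C2 -> S \subset closed_nbhd e u.
  move=> u; rewrite inE => /orP hu; apply/subsetP => s hs.
  rewrite inE; case: eqVneq => [->|neq] //=.
  case: hu => hu.
  - by apply: cl1 => //; [exact: (subsetP sS1)|rewrite eq_sym].
  - by apply: cl2 => //; [exact: (subsetP sS2)|rewrite eq_sym].
have clU : is_clique e (C1 :|: C2).
  move=> u v hu hv neq; rewrite -hpol /Pk_rel neq /= -hS.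
  apply: subset_leq_card; rewrite subsetI inN // inN //.
have h1 := max1 _ clU (subsetUl _ _).
have h2 := max2 _ clU (subsetUr _ _).
by rewrite -h1 h2.
Qed.
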